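(* Let $m,p,n$ be positive integers with $p\mid m$ and $n>1$. If $(T_1,\ldots,T_n)$ is a $\boldsymbol\Theta_n$-contraction, then $(\gamma_1T_1,\ldots,\gamma_{n-1}T_{n-1})$ is a $\Gamma_{n-1}$-contraction, where $\gamma_j=\frac{n-j}{n}$ for $j=1,\ldots,n-1$.
   Context: Put $q=m/p$. $G(m,p,n)$ is the group of $n\times n$ monomial matrices whose nonzero entries are $m$-th roots of unity and whose product of nonzero entries is an $(m/p)$-th root of unity. Let $s_i$ be the $i$-th elementary symmetric polynomial; $\theta_i(z)=s_i(z_1^m,\ldots,z_n^m)$ for $1\le i\le n-1$, $\theta_n(z)=(z_1\cdots z_n)^q$, $\boldsymbol\theta=(\theta_1,\dots,\theta_n)$, $\boldsymbol\Theta_n=\boldsymbol\theta(\mathbb D^n)$, $\overline{\boldsymbol\Theta}_n=\boldsymbol\theta(\overline{\mathbb D}^n)$. A commuting tuple $(T_1,\dots,T_n)$ of bounded operators on a Hilbert space is a $\boldsymbol\Theta_n$-contraction if $\|f(T_1,\dots,T_n)\|\le\sup_{\overline{\boldsymbol\Theta}_n}|f|$ for every polynomial $f\in\mathbb C[z_1,\dots,z_n]$. $\Gamma_k=\boldsymbol s(\overline{\mathbb D}^k)$ is the closed symmetrized polydisc, and a $\Gamma_k$-contraction is a commuting $k$-tuple $S$ with $\|f(S)\|\le\sup_{\Gamma_k}|f|$ for all polynomials $f$ in $k$ variables. *)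

(* Defs.v *)
From HB Require Import structures.
From mathcomp Require Import all_boot all_order all_algebra.
From mathcomp Require Import all_classical all_reals all_analysis.
From mathcomp Require Import complex.
From mathcomp Require mpoly.
Set Implicit Arguments. Unset Strict Implicit. Unset Printing Implicit Defensive.
Import Order.TTheory GRing.Theory Num.Theory.
Local Open Scope ring_scope.
Local Open Scope classical_set_scope.

Definition hilbert_ip (R : realType) (H : normedModType R[i])
    (ip : H -> H -> R[i]) : Prop :=
  [/\ forall a x y z, ip (a *: x + y) z = a * ip x z + ip y z,
      forall x y, ip y x = (ip x y)^*
    & forall x, ip x x = `|x| ^+ 2].

Definition bounded_op (R : realType) (H : normedModType R[i]) (A : H -> H) : Prop :=
  (forall a x y, A (a *: x + y) = a *: A x + A y) /\
  exists c : R[i], forall x, `|A x| <= c * `|x|.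

Definition commuting_tuple (R : realType) (H : normedModType R[i]) (k : nat)
    (T : 'I_k -> H -> H) : Prop :=
  (forall i, bounded_op (T i)) /\ (forall i j x, T i (T j x) = T j (T i x)).

Definition mono_op (R : realType) (H : normedModType R[i]) (k : nat)
    (T : 'I_k -> H -> H) (a : mpoly.multinom k) : H -> H :=
  foldr (fun i g => iter (mpoly.fun_of_multinom a i) (T i) \o g) id (enum 'I_k).

Definition peval (R : realType) (H : normedModType R[i]) (k : nat)
    (f : mpoly.mpoly k R[i]) (T : 'I_k -> H -> H) (x : H) : H :=
  \sum_(a <- mpoly.msupp f) mpoly.mcoeff a f *: mono_op T a x.

Definition cpolydisc (R : realType) (k : nat) : set ('I_k -> R[i]) :=
  [set z | forall i, `|z i| <= 1].

(* K-contraction: ||f(T)|| <= sup_K |f| for every polynomial f, written as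
   ||f(T) x|| <= M ||x|| for every upper bound M of |f| on K. *)
Definition K_contraction (R : realType) (H : normedModType R[i]) (k : nat)
    (K : set ('I_k -> R[i])) (T : 'I_k -> H -> H) : Prop :=
  commuting_tuple T /\
  forall (f : mpoly.mpoly k R[i]) (M : R[i]),
    (forall w, K w -> `|mpoly.meval w f| <= M) ->
    forall x, `|peval f T x| <= M * `|x|.

Definition esym (R : realType) (k : nat) (i : nat) (w : 'I_k -> R[i]) : R[i] :=
  \sum_(S : {set 'I_k} | #|S| == i) \prod_(j in S) w j.

Definition symmap (R : realType) (k : nat) (z : 'I_k -> R[i]) : 'I_k -> R[i] :=
  fun j => esym j.+1 z.

Definition Gamma (R : realType) (k : nat) : set ('I_k -> R[i]) :=
  @symmap R k @` @cpolydisc R k.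

(* theta = (theta_1,...,theta_n), index j : 'I_n stands for theta_{j+1} *)
Definition theta (R : realType) (m p n : nat) (z : 'I_n -> R[i]) : 'I_n -> R[i] :=
  fun j => if (j.+1 < n)%N then esym j.+1 (fun i => z i ^+ m)
           else (\prod_i z i) ^+ (m %/ p).

Definition Theta_bar (R : realType) (m p n : nat) : set ('I_n -> R[i]) :=
  @theta R m p n @` @cpolydisc R n.

(* gamma_{j+1} = (n - (j+1)) / n *)
Definition gammaj (R : realType) (n : nat) (j : nat) : R[i] :=
  (n - j.+1)%N%:R / n%:R.

(* Main.v *)
Require Import Defs.
From HB Require Import structures.
From mathcomp Require Import all_boot all_order all_algebra.
From mathcomp Require Import complex.
From mathcomp Require Import mpoly.
From mathcomp Require Import ring.
Import Order.TTheory GRing.Theory Num.Theory.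
Local Open Scope ring_scope.

Lemma deriv_prod_seq (R : comNzRingType) (I : eqType) (s : seq I) (F : I -> {poly R}) :
  uniq s ->
  (\prod_(i <- s) F i)^`() = \sum_(i <- s) (F i)^`() * \prod_(j <- s | j != i) F j.
Proof.
elim: s => [|a s IH] /=; first by rewrite !big_nil derivC.
move=> /andP [anot us]; rewrite !big_cons derivM IH // eqxx /=.
congr (_ + _).
  congr (_ * _); rewrite [LHS]big_seq_cond [RHS]big_seq_cond; apply: eq_bigl => j.
  case jin: (j \in s) => //=; symmetry; apply: contraNneq anot => <-; exact: jin.
rewrite mulr_sumr; apply: eq_big_seq => i iin; rewrite big_cons.
have -> : (a != i) by apply: contraNneq anot => ->.
by rewrite mulrCA.
Qed.

Lemma GL_root (C : numClosedFieldType) (n : nat) (w : 'I_n.+1 -> C) (u : C) :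
  (forall i, `|w i| <= 1) ->
  (\prod_(i < n.+1) ('X - (w i)%:P))^`().[u] = 0 -> `|u| <= 1.
Proof.
move=> hw.
case: (boolP [exists i, u == w i]) => [/existsP [i /eqP ->] // | /existsPn hne].
have dnz i : u - w i != 0 by rewrite subr_eq0 hne.
rewrite deriv_prod_seq ?index_enum_uniq // horner_sum.
under eq_bigr => i _ do rewrite derivXsubC mul1r horner_prod.
set D := \prod_i (u - w i).
have Dnz : D != 0 by apply/prodf_neq0 => i _.
have eq1 i : \prod_(j | j != i) ('X - (w j)%:P).[u] = D / (u - w i).
  have -> : D = (u - w i) * \prod_(j | j != i) (u - w j) by rewrite /D (bigD1 i).
  rewrite mulrAC divff // mul1r.
  by apply: eq_bigr => j _; rewrite hornerXsubC.
under eq_bigr => i _ do rewrite eq1.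
rewrite -mulr_sumr => /eqP; rewrite mulf_eq0 (negbTE Dnz) /= => /eqP hs.
have hc : \sum_i `|u - w i| ^- 2 * (u - w i) = 0.
  have := congr1 (@Num.conj_op C) hs; rewrite rmorph0 rmorph_sum => h.
  apply: (etrans _ h); apply: eq_bigr => i _.
  by rewrite invC_norm rmorphM /= conjCK fmorphV rmorphXn /= conj_normC.
set c := fun i => `|u - w i| ^- 2.
have cpos i : 0 < c i by rewrite /c invr_gt0 exprn_gt0 // normr_gt0.
have Spos : 0 < \sum_i c i.
  rewrite (bigD1 ord0) //= ltr_pwDl ?cpos //; apply: sumr_ge0 => i _; exact: ltW.
have eq2 : u * \sum_i c i = \sum_i c i * w i.
  apply/eqP; rewrite -subr_eq0 mulr_sumr -sumrB; apply/eqP; apply: (etrans _ hc).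
  by apply: eq_bigr => i _; rewrite mulrBr mulrC.
rewrite -(ler_pM2r Spos) mul1r.
have : `|u * \sum_i c i| <= \sum_i c i.
  rewrite eq2; apply: (le_trans (ler_norm_sum _ _ _)).
apply: ler_sum => i _; rewrite normrM ger0_norm ?(ltW (cpos i)) //.
  by rewrite -[X in _ <= X]mulr1 ler_wpM2l ?(ltW (cpos i)).
by rewrite normrM (ger0_norm (ltW Spos)).
Qed.

Arguments GL_root {C n w u}.

Definition esymG (C : nzRingType) (k i : nat) (w : 'I_k -> C) : C :=
  \sum_(S : {set 'I_k} | #|S| == i) \prod_(j in S) w j.

Arguments esymG {C k} i w.

Lemma meval_mesym (C : comNzRingType) k i (v : 'I_k -> C) :
  (@mesym k C i).@[v] = esymG i v.
Proof.
rewrite /mesym rmorph_sum; apply: eq_bigr => S _; rewrite rmorph_prod.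
by apply: eq_bigr => j _; rewrite /= mevalXU.
Qed.

Lemma esymG0 (C : comNzRingType) k (v : 'I_k -> C) : esymG 0 v = 1.
Proof. by rewrite -meval_mesym (@mesym0E k C) rmorph1. Qed.

Lemma coefP (C : idomainType) n (w : 'I_n -> C) (i : 'I_n.+1) :
  (\prod_(j < n) ('X - (w j)%:P))`_(n - i) = (-1)^+i * esymG i w.
Proof.
have := mroots_coeff [tuple w j | j < n] i; rewrite big_tuple.
under eq_bigr do rewrite tnth_mktuple.
move=> ->; rewrite meval_mesym; congr (_ * _); apply: eq_bigr => S _.
by apply: eq_bigr => j _; rewrite tnth_mktuple.
Qed.

Arguments coefP {C n} w i.

Lemma size_index_ord n : size (index_enum 'I_n) = n.
Proof. by rewrite /index_enum; unlock; rewrite -enumT -cardT card_ord. Qed.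

Lemma GL (C : numClosedFieldType) (k : nat) (w : 'I_k.+1 -> C) :
  (forall i, `|w i| <= 1) ->
  exists u : 'I_k -> C, (forall j, `|u j| <= 1) /\
    forall j : 'I_k, esymG j.+1 u = (k - j)%:R / k.+1%:R * esymG j.+1 w.
Proof.
move=> hw.
set P := \prod_(i < k.+1) ('X - (w i)%:P).
set Q := k.+1%:R^-1 *: P^`().
have nk : k.+1%:R != 0 :> C by rewrite pnatr_eq0.
have cQ i : Q`_i = k.+1%:R^-1 * (P`_i.+1 *+ i.+1) by rewrite coefZ coef_deriv.
have Pmon : P`_k.+1 = 1.
  by have := coefP w ord0; rewrite subn0 /= esymG0 mulr1 expr0.
have Qk : Q`_k = 1 by rewrite cQ Pmon mulVf.
have szP : size P = k.+2 by rewrite size_prod_XsubC size_index_ord.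
have Pnz : P != 0 by rewrite -size_poly_eq0 szP.
have szQ : size Q = k.+1.
  apply/eqP; rewrite eqn_leq; apply/andP; split.
    apply: leq_trans (size_scale_leq _ _) _; rewrite -ltnS -szP.
    exact: lt_size_deriv.
  rewrite ltnNge; apply/negP => /(nth_default 0); rewrite Qk => /eqP.
  by rewrite oner_eq0.
have [r hr] := closed_field_poly_normal Q.
rewrite lead_coefE szQ /= Qk scale1r in hr.
have szr : size r == k by rewrite -eqSS -szQ hr size_prod_XsubC.
pose rt : k.-tuple C := Tuple szr.
exists (tnth rt); split.
  move=> j; apply: (GL_root hw).
  have : root Q (tnth rt j) by rewrite hr root_prod_XsubC mem_tnth.
  by rewrite /root /Q hornerZ mulf_eq0 invr_eq0 (negbTE nk) /= => /eqP.
move=> j.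
have jlt : (j.+1 < k.+1)%N by rewrite ltnS ltn_ord.
have := mroots_coeff rt (Ordinal jlt); rewrite /= -hr meval_mesym cQ subnSK //.
have jlt2 : (j.+1 < k.+2)%N by rewrite ltnS ltnW.
have := coefP w (Ordinal jlt2); rewrite /= subSS -/P => ->.
move=> h; apply: (mulfI (negbT (signr_eq0 _ j.+1))) ; rewrite -h.
rewrite mulrnAr -mulr_natl; ring.
Qed.

From mathcomp Require Import all_classical all_reals all_analysis.
From mathcomp Require Import complex.
Import Order.TTheory GRing.Theory Num.Theory.
Local Open Scope ring_scope.
Set Implicit Arguments. Unset Strict Implicit.

Definition islin (R : realType) (H : normedModType R[i]) (A : H -> H) :=
  forall (a : R[i]) x y, A (a *: x + y) = a *: A x + A y.

Lemma islin0 (R : realType) (H : normedModType R[i]) (A : H -> H) :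
  islin A -> A 0 = 0.
Proof.
move=> h; have e := h 1 0 0; rewrite !scale1r !addr0 in e.
by apply: (addrI (A 0)); rewrite addr0 -e.
Qed.

Lemma islinZ (R : realType) (H : normedModType R[i]) (A : H -> H) a x :
  islin A -> A (a *: x) = a *: A x.
Proof. by move=> h; rewrite -[a *: x]addr0 h islin0 // addr0. Qed.

Lemma islin_iter (R : realType) (H : normedModType R[i]) (A : H -> H) e :
  islin A -> islin (iter e A).
Proof. by move=> h; elim: e => [|e IH] a x y //=; rewrite IH h. Qed.

Lemma mono_lin_l (R : realType) (H : normedModType R[i]) n
  (T : 'I_n -> H -> H) (a : 'X_{1..n}) (l : seq 'I_n) :
  (forall i, islin (T i)) ->
  islin (foldr (fun i g => iter (a i) (T i) \o g) id l).
Proof.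
move=> hT; elim: l => [|i l IH] b x y //=.
by rewrite IH islin_iter.
Qed.

Lemma mono_lin (R : realType) (H : normedModType R[i]) n
  (T : 'I_n -> H -> H) (a : 'X_{1..n}) :
  (forall i, islin (T i)) -> islin (mono_op T a).
Proof. exact: mono_lin_l. Qed.

Lemma peval_seq (R : realType) (H : normedModType R[i]) n
  (T : 'I_n -> H -> H) (f : {mpoly R[i][n]}) (s : seq 'X_{1..n}) x :
  uniq s -> {subset msupp f <= s} ->
  peval f T x = \sum_(a <- s) f@_a *: mono_op T a x.
Proof.
move=> us sub; rewrite /peval [RHS](bigID (mem (msupp f))) /=.
rewrite [X in _ = _ + X]big1 ?addr0; last first.
  by move=> a; rewrite mcoeff_msupp negbK => /eqP ->; rewrite scale0r.
rewrite -[RHS]big_filter; apply: perm_big.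
apply: uniq_perm; rewrite ?msupp_uniq ?filter_uniq // => a.
by rewrite mem_filter; case h: (a \in msupp f) => //=; rewrite sub.
Qed.

Lemma pevalDZ (R : realType) (H : normedModType R[i]) n
  (T : 'I_n -> H -> H) (c : R[i]) (p q : {mpoly R[i][n]}) x :
  peval (c *: p + q) T x = c *: peval p T x + peval q T x.
Proof.
set s := undup (msupp p ++ msupp q ++ msupp (c *: p + q)).
have us : uniq s by exact: undup_uniq.
rewrite !(@peval_seq _ _ _ _ _ s) //; try by move=> a ha; rewrite mem_undup !mem_cat ha ?orbT.
rewrite scaler_sumr -big_split /=; apply: eq_bigr => a _.
by rewrite mcoeffD mcoeffZ scalerDl scalerA.
Qed.

Lemma peval0 (R : realType) (H : normedModType R[i]) n
  (T : 'I_n -> H -> H) x : peval 0 T x = 0.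
Proof. by rewrite /peval msupp0 big_nil. Qed.

Lemma pevalX (R : realType) (H : normedModType R[i]) n
  (T : 'I_n -> H -> H) m x : peval 'X_[m] T x = mono_op T m x.
Proof. by rewrite /peval msuppX big_seq1 mcoeffX eqxx scale1r. Qed.

Lemma pevalZ (R : realType) (H : normedModType R[i]) n
  (T : 'I_n -> H -> H) c p x : peval (c *: p) T x = c *: peval p T x.
Proof. by rewrite -[c *: p]addr0 pevalDZ peval0 addr0. Qed.

Definition commT (R : realType) (H : normedModType R[i]) n (T : 'I_n -> H -> H) :=
  forall i j x, T i (T j x) = T j (T i x).

Lemma iter_comm (R : realType) (H : normedModType R[i]) (A B : H -> H) e :
  (forall x, A (B x) = B (A x)) -> forall x, A (iter e B x) = iter e B (A x).
Proof. by move=> h; elim: e => [|e IH] x //=; rewrite h IH. Qed.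

Lemma fold_comm (R : realType) (H : normedModType R[i]) n
  (T : 'I_n -> H -> H) (a : 'X_{1..n}) (l : seq 'I_n) (A : H -> H) :
  (forall i x, A (T i x) = T i (A x)) ->
  forall x, A (foldr (fun i g => iter (a i) (T i) \o g) id l x) =
            foldr (fun i g => iter (a i) (T i) \o g) id l (A x).
Proof.
move=> h; elim: l => [|i l IH] x //=.
rewrite -IH; apply: iter_comm => y; exact: h.
Qed.

Lemma mono_add (R : realType) (H : normedModType R[i]) n
  (T : 'I_n -> H -> H) (a b : 'X_{1..n}) x :
  commT T -> mono_op T (a + b) x = mono_op T a (mono_op T b x).
Proof.
move=> hc; rewrite /mono_op; elim: (enum 'I_n) x => [|i l IH] x //=.
rewrite mnmDE iterD IH; congr (iter _ _ _).
apply: (@fold_comm _ _ _ T a l (iter (b i) (T i))) => j y.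
by symmetry; apply: iter_comm => z; exact: hc.
Qed.

Lemma mono0 (R : realType) (H : normedModType R[i]) n
  (T : 'I_n -> H -> H) x : mono_op T 0%MM x = x.
Proof.
by rewrite /mono_op; elim: (enum 'I_n) => [|i l IH] //=; rewrite mnm0E.
Qed.

Lemma pevalXM (R : realType) (H : normedModType R[i]) n
  (T : 'I_n -> H -> H) m q x :
  (forall i, islin (T i)) -> commT T ->
  peval ('X_[m] * q) T x = mono_op T m (peval q T x).
Proof.
move=> hl hc; elim/mpolyind: q => [|c m' q _ _ IH].
  by rewrite mulr0 !peval0 islin0 //; apply: mono_lin.
rewrite mulrDr -scalerAr -mpolyXD !pevalDZ IH !pevalX mono_add //.
by rewrite mono_lin.
Qed.

Lemma pevalM (R : realType) (H : normedModType R[i]) n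
  (T : 'I_n -> H -> H) p q x :
  (forall i, islin (T i)) -> commT T ->
  peval (p * q) T x = peval p T (peval q T x).
Proof.
move=> hl hc; elim/mpolyind: p => [|c m p _ _ IH].
  by rewrite mul0r !peval0.
by rewrite mulrDl -scalerAl !pevalDZ IH pevalXM // pevalX.
Qed.

Lemma peval1 (R : realType) (H : normedModType R[i]) n
  (T : 'I_n -> H -> H) x : peval 1 T x = x.
Proof. by rewrite -mpolyX0 pevalX mono0. Qed.

Lemma pevalXn (R : realType) (H : normedModType R[i]) n
  (T : 'I_n -> H -> H) p e x :
  (forall i, islin (T i)) -> commT T ->
  peval (p ^+ e) T x = iter e (peval p T) x.
Proof.
move=> hl hc; elim: e x => [|e IH] x; first by rewrite expr0 peval1.
by rewrite exprS pevalM // IH.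
Qed.

Lemma peval_prod (R : realType) (H : normedModType R[i]) n
  (T : 'I_n -> H -> H) (I : Type) (l : seq I) (P : I -> {mpoly R[i][n]}) x :
  (forall i, islin (T i)) -> commT T ->
  peval (\prod_(i <- l) P i) T x = foldr (fun i g => peval (P i) T \o g) id l x.
Proof.
move=> hl hc; elim: l x => [|i l IH] x; first by rewrite big_nil peval1.
by rewrite big_cons pevalM // IH.
Qed.

Lemma pevalXU (R : realType) (H : normedModType R[i]) n
  (T : 'I_n -> H -> H) (j : 'I_n) x : peval 'X_j T x = T j x.
Proof.
rewrite pevalX /mono_op.
have : uniq (enum 'I_n) by exact: enum_uniq.
have : j \in enum 'I_n by rewrite mem_enum.
elim: (enum 'I_n) => [|i l IH] //= jin /andP [inl ul].
rewrite mnm1E; case: eqP => [ji|/eqP nji] /=.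
  subst i; have -> : foldr (fun i g => iter (U_(j)%MM i) (T i) \o g) id l x = x.
    elim: l inl {IH jin ul} => [|i l IH2] //= /norP [ni nl].
    by rewrite mnm1E (negbTE ni) /= IH2.
  by [].
rewrite in_cons (negbTE nji) /= in jin.
by rewrite IH.
Qed.

Lemma peval_comp (R : realType) (H : normedModType R[i]) n k
  (T : 'I_n -> H -> H) (S : 'I_k -> H -> H) (lq : k.-tuple {mpoly R[i][n]}) f x :
  (forall i, islin (T i)) -> commT T ->
  (forall i y, peval (tnth lq i) T y = S i y) ->
  peval (f \mPo lq) T x = peval f S x.
Proof.
move=> hl hc hS; elim/mpolyind: f x => [|c m p _ _ IH] x.
  by rewrite comp_mpoly0 !peval0.
rewrite comp_mpolyD.
rewrite comp_mpolyZ.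
rewrite !pevalDZ.
congr (_ + _); last exact: IH.
rewrite pevalX.
congr (_ *: _).
rewrite comp_mpolyX.
rewrite peval_prod //.
 rewrite /mono_op /index_enum.
 unlock.
rewrite -enumT.
elim: (enum 'I_k) x => [|i l IH2] x //=.
rewrite pevalXn // IH2; apply: eq_iter => y; exact: hS.
Qed.


Lemma main_k (R : realType) (H : normedModType R[i]) (m p k : nat)
  (le : (k <= k.+1)%N) (T : 'I_k.+1 -> H -> H) :
  K_contraction (@Theta_bar R m p k.+1) T ->
  K_contraction (@Gamma R k)
    (fun (j : 'I_k) (x : H) => gammaj R k.+1 j *: T (widen_ord le j) x).
Proof.
move=> [[hb hc] hK].
have hl i : islin (T i) by case: (hb i).
have hl' : forall j : 'I_k, islin (fun x => gammaj R k.+1 j *: T (widen_ord le j) x).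
  by move=> j a x y; rewrite hl scalerDr !scalerA mulrC.
split.
  split.
    move=> j; split; first exact: hl'.
    have [_ [c hcb]] := hb (widen_ord le j).
    exists (`|gammaj R k.+1 j| * c) => x.
    by rewrite normrZ -mulrA ler_wpM2l.
  move=> i j x.
  change (gammaj R k.+1 i *: T (widen_ord le i) (gammaj R k.+1 j *: T (widen_ord le j) x) = gammaj R k.+1 j *: T (widen_ord le j) (gammaj R k.+1 i *: T (widen_ord le i) x)).
  rewrite (islinZ _ _ (hl _)) (islinZ _ _ (hl _)) !scalerA mulrC hc.
  by [].
move=> f M hM x.
pose lq := [tuple (gammaj R k.+1 i) *: 'X_(widen_ord le i) | i < k] : k.-tuple {mpoly R[i][k.+1]}.
have hS : forall i y, peval (tnth lq i) T y = gammaj R k.+1 i *: T (widen_ord le i) y.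
  by move=> i y; rewrite tnth_mktuple pevalZ pevalXU.
rewrite -(@peval_comp _ _ _ _ T _ lq f x hl hc hS).
apply: hK => w [z hz <-].
rewrite comp_mpoly_meval.
have hw : forall i, `|z i ^+ m| <= 1 by move=> i; rewrite normrX exprn_ile1 // hz.
have [u [hu hue]] := @GL _ k (fun i => z i ^+ m) hw.
apply: hM; exists u => //; apply: funext => j.
rewrite tnth_mktuple mevalZ mevalXU /theta /= ltnS ltn_ord /symmap.
rewrite /gammaj subSS; exact: (hue j).
Qed.

Unset Implicit Arguments. Set Strict Implicit.

Theorem lemma2p7 (R : realType) (H : completeNormedModType R[i])
  (ip : H -> H -> R[i]) (Hip : hilbert_ip ip)
  (m p n : nat) (hm : (0 < m)%N) (hp : (0 < p)%N) (hpm : (p %| m)%N) (hn : (1 < n)%N)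
  (T : 'I_n -> H -> H) :
  K_contraction (@Theta_bar R m p n) T ->
  K_contraction (@Gamma R n.-1)
    (fun (j : 'I_n.-1) (x : H) => gammaj R n j *: T (widen_ord (leq_pred n) j) x).
Proof.
move=> hK; case: n hn T hK => [|k] // _ T hK.
exact: (@main_k R H m p k (leq_pred k.+1) T hK).
Qed.
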